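(* Consider $\mathbb{R}$ as an SSD space with the bilinear form $\lfloor x,y\rfloor=xy$, so $q(x)=\frac12x^2$. For a nonempty set $A\subset\mathbb{R}$, one has $A=G_{\Phi_A}$ if and only if $A$ is closed and convex.
   Context: For nonempty $A\subset\mathbb{R}$, $\Phi_A(x)=\sup_{a\in A}\{xa-\frac12a^2\}$. For a proper convex $f:\mathbb{R}\to\mathbb{R}\cup\{+\infty\}$, $f^{@}(b)=\sup_{c\in\mathbb{R}}\{cb-f(c)\}$ and $G_f=\{b\in\mathbb{R}: f(b)+f^{@}(b)=b^2\}$. *)

(* Defs.v *)
From HB Require Import structures.
From mathcomp Require Import all_boot all_order all_algebra.
From mathcomp Require Import all_classical all_reals all_analysis.
Set Implicit Arguments. Unset Strict Implicit. Unset Printing Implicit Defensive.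
Import Order.TTheory GRing.Theory Num.Theory.
Local Open Scope classical_set_scope.
Local Open Scope ring_scope.
Local Open Scope ereal_scope.

Definition PhiA (R : realType) (A : set R) (x : R) : \bar R :=
  ereal_sup [set ((x * a - a ^+ 2 / 2)%R)%:E | a in A].

Definition fconj (R : realType) (f : R -> \bar R) (b : R) : \bar R :=
  ereal_sup [set ((c * b)%R)%:E - f c | c in [set: R]].

Definition Gset (R : realType) (f : R -> \bar R) : set R :=
  [set b | f b + fconj f b = ((b ^+ 2)%R)%:E].

(* Main.v *)
Require Import Defs.
From HB Require Import structures.
From mathcomp Require Import all_boot all_order all_algebra.
From mathcomp Require Import all_classical all_reals all_analysis.
From mathcomp Require Import ring lra.
Import Order.TTheory GRing.Theory Num.Theory numFieldTopology.Exports numFieldNormedType.Exports.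
Local Open Scope classical_set_scope.
Local Open Scope ring_scope.

Section Aux.
Variables (R : realType) (A : set R).
Hypothesis A0 : A !=set0.

Lemma Phi_ub x : (PhiA A x <= (x ^+ 2 / 2)%:E)%E.
Proof.
apply: ge_ereal_sup => _ [a Aa <-]; rewrite lee_fin.
have := sqr_ge0 (x - a); nra.
Qed.

Lemma Phi_lb x a : A a -> ((x * a - a ^+ 2 / 2)%:E <= PhiA A x)%E.
Proof. by move=> Aa; apply: ereal_sup_ubound; exists a. Qed.

Lemma Phi_fin x : PhiA A x \is a fin_num.
Proof.
case: A0 => a0 Aa0.
move: (Phi_ub x) (Phi_lb x a0 Aa0); case: (PhiA A x) => //.
Qed.

Definition phi x := fine (PhiA A x).
Lemma PhiE x : PhiA A x = (phi x)%:E.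
Proof. by rewrite /phi fineK // Phi_fin. Qed.

Lemma phi_ub x : phi x <= x ^+ 2 / 2.
Proof. by have := Phi_ub x; rewrite PhiE lee_fin. Qed.

Lemma phi_lb x a : A a -> x * a - a ^+ 2 / 2 <= phi x.
Proof. by move=> Aa; have := Phi_lb x a Aa; rewrite PhiE lee_fin. Qed.

Lemma phi_le x r : (forall a, A a -> x * a - a ^+ 2 / 2 <= r) -> phi x <= r.
Proof.
move=> H; rewrite -lee_fin -PhiE; apply: ge_ereal_sup => _ [a Aa <-].
by rewrite lee_fin H.
Qed.

Lemma closure_ex a d : closure A a -> 0 < d -> exists a', A a' /\ `|a - a'| < d.
Proof.
move=> cl d0; have [a' [Aa' ba']] := cl _ (nbhsx_ballx a d d0).
by exists a'; split => //; move: ba'; rewrite /ball /=.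
Qed.

Lemma closure_in a : (forall d, 0 < d -> exists a', A a' /\ `|a - a'| < d) ->
  closure A a.
Proof.
move=> H B /nbhs_ballP [d /= d0 sub]; have [a' [Aa' h]] := H d d0.
by exists a'; split => //; apply: sub; rewrite /ball /=.
Qed.

Lemma phi_cl x a : closure A a -> x * a - a ^+ 2 / 2 <= phi x.
Proof.
move=> cl; rewrite leNgt; apply/negP => lt.
set e := x * a - a ^+ 2 / 2 - phi x.
have e0 : 0 < e by rewrite /e subr_gt0.
set k := `|x - a| + 1 + e.
have k0 : 0 < k by rewrite /k; have := normr_ge0 (x - a); lra.
set d := e / k.
have d0 : 0 < d by rewrite /d divr_gt0.
have dk : d * k = e by rewrite /d mulrVK // unitfE gt_eqF.
have d1 : d < 1.
  rewrite /d ltr_pdivrMr // mul1r /k; have := normr_ge0 (x - a); lra.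
have [a' [Aa' h]] := @closure_ex a d cl d0.
have := phi_lb x a' Aa'.
set hh := a' - a.
have -> : x * a' - a' ^+ 2 / 2 = x * a - a ^+ 2 / 2 + hh * (x - a) - hh ^+ 2 / 2.
  by rewrite /hh; field.
have h1 : `|hh| < d by rewrite /hh distrC.
have h2 : - (hh * (x - a)) <= `|hh| * `|x - a|.
  by rewrite -normrM; apply: (le_trans (ler_norm _)); rewrite normrN.
have h3 : `|hh| * `|x - a| <= d * `|x - a|.
  by apply: ler_wpM2r => //; apply: ltW.
have h4 : hh ^+ 2 = `|hh| ^+ 2 by rewrite real_normK // num_real.
have h5 : `|hh| ^+ 2 <= d * `|hh| by rewrite expr2 ler_wpM2r // ltW.
have h6 : d * `|hh| <= d by rewrite ler_piMr ?ltW //; lra.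
have : d * k = d * `|x - a| + d + d * e by rewrite /k; field.
have : 0 < d * e by rewrite mulr_gt0.
rewrite /e in dk *. lra.
Qed.

Lemma inG b f : phi b = f -> (forall c, f + b * (c - b) <= phi c) ->
  Gset (PhiA A) b.
Proof.
move=> pb H; rewrite /Gset /= PhiE pb.
have -> : fconj (PhiA A) b = (b ^+ 2 - f)%:E.
  apply/eqP; rewrite eq_le; apply/andP; split.
    apply: ge_ereal_sup => _ [c _ <-]; rewrite PhiE -EFinB lee_fin.
    have := H c; nra.
  apply: ereal_sup_ubound; exists b => //; rewrite PhiE pb -EFinB.
  by congr (_%:E); rewrite expr2.
by rewrite -EFinD; congr (_%:E); rewrite addrC subrK.
Qed.

Lemma notG b p : A p -> p != b -> (forall a, A a -> 0 <= (p - a) * (b - p)) ->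
  ~ Gset (PhiA A) b.
Proof.
move=> Ap pb H; rewrite /Gset /= PhiE => G.
set c := 2 * b - p.
have hc : phi c <= c * p - p ^+ 2 / 2.
  apply: phi_le => a Aa; have := H a Aa; rewrite /c.
  have := sqr_ge0 (p - a); nra.
have hb := phi_lb b p Ap.
have hf : ((c * b)%:E - PhiA A c <= fconj (PhiA A) b)%E.
  by apply: ereal_sup_ubound; exists c.
rewrite PhiE -EFinB in hf.
have : ((phi b + (c * b - phi c))%:E <= (b ^+ 2)%:E)%E.
  by rewrite -G EFinD leeD2l.
rewrite lee_fin.
have : 0 < (b - p) ^+ 2 by rewrite lt_neqAle sqr_ge0 andbT eq_sym sqrf_eq0 subr_eq0 eq_sym.
rewrite /c in hc *; nra.
Qed.

Lemma clG b : closure A b -> Gset (PhiA A) b.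
Proof.
move=> cb; apply: (@inG b (b ^+ 2 / 2)).
  apply/le_anti/andP; split; first exact: phi_ub.
  have := phi_cl b b cb; lra.
by move=> c; have := phi_cl c b cb; nra.
Qed.

Lemma sup_cl (S : set R) : S `<=` A -> S !=set0 -> has_ubound S ->
  closure A (sup S).
Proof.
move=> SA S0 ub; apply: closure_in => d d0.
have [e Se he] := sup_adherent d0 (conj S0 ub).
exists e; split; first exact: SA.
have := sup_upper_bound (conj S0 ub) Se.
by move=> h; rewrite ger0_norm ?subr_ge0 //; lra.
Qed.

Lemma inf_cl (S : set R) : S `<=` A -> S !=set0 -> has_lbound S ->
  closure A (inf S).
Proof.
move=> SA S0 lb; apply: closure_in => d d0.
have [e Se he] := inf_adherent d0 (conj S0 lb).
exists e; split; first exact: SA.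
have := ge_inf lb Se.
by move=> h; rewrite distrC ger0_norm ?subr_ge0 //; lra.
Qed.

Lemma gap (clA : closed A) (AG : forall b, Gset (PhiA A) b -> A b) a1 a2 m :
  A a1 -> A a2 -> a1 <= m -> m <= a2 -> A m.
Proof.
move=> A1 A2 h1 h2; apply: contrapT => nm.
set S1 := [set a | A a /\ a <= m].
set S2 := [set a | A a /\ m <= a].
have S1A : S1 `<=` A by move=> a [].
have S2A : S2 `<=` A by move=> a [].
have S10 : S1 !=set0 by exists a1.
have S20 : S2 !=set0 by exists a2.
have ub1 : has_ubound S1 by exists m => a [].
have lb2 : has_lbound S2 by exists m => a [].
set L := sup S1. set U := inf S2.
have AL : A L by apply: clA; apply: sup_cl.
have AU : A U by apply: clA; apply: inf_cl.
have Lm : L <= m by apply: ge_sup => // a [].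
have mU : m <= U by apply: lb_le_inf => // a [].
have Lm' : L < m by rewrite lt_neqAle Lm andbT; apply/eqP => e; apply: nm; rewrite -e.
have mU' : m < U by rewrite lt_neqAle mU andbT; apply/eqP => e; apply: nm; rewrite e.
have hA : forall a, A a -> a <= L \/ U <= a.
  move=> a Aa; have [am|ma] := leP a m.
    by left; apply: sup_upper_bound => //; split.
  by right; apply: ge_inf => //; split => //; apply: ltW.
set mid := (L + U) / 2.
have Amid : A mid.
  apply: AG; apply: (@inG mid (mid * L - L ^+ 2 / 2)).
    apply/le_anti/andP; split; last exact: phi_lb.
    apply: phi_le => a Aa; rewrite /mid.
    by case: (hA a Aa) => ha; nra.
  move=> c; have := phi_lb c L AL; have := phi_lb c U AU; rewrite /mid.
  nra.
case: (hA mid Amid); rewrite /mid; lra.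
Qed.

End Aux.

Theorem mainTheorem20 (R : realType) (A : set R) :
  A !=set0 ->
  (A = Gset (PhiA A) <-> closed A /\ @convex_set R R^o A).
Proof.
move=> A0; split.
  move=> AG.
  have clA : closed A by move=> b cb; rewrite AG; exact: clG.
  split => // x y l; rewrite !in_setE => xA yA.
  have -> : conv l x y = l%:num * (x : R) + (1 - l%:num) * (y : R) by [].
  idtac.
  have l0 : 0 <= l%:num by [].
  have l1 : l%:num <= 1 by [].
  have AG' : forall b, Gset (PhiA A) b -> A b by move=> b; rewrite -AG.
  have [xy|yx] := leP x y.
    apply: (@gap R A A0 clA AG' x y _ xA yA); nra.
  apply: (@gap R A A0 clA AG' y x _ yA xA); nra.
move=> [clA cvA]; apply/seteqP; split.
  by move=> a Aa; apply: clG => //; apply: subset_closure.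
move=> b Gb; apply: contrapT => nb.
have [[a1 [A1 a1b]]|n1] := pselect (exists a1, A a1 /\ a1 < b).
  have [[a2 [A2 ba2]]|n2] := pselect (exists a2, A a2 /\ b < a2).
    have d0 : 0 < a2 - a1 by lra.
    have t0 : 0 <= (a2 - b) / (a2 - a1) by rewrite divr_ge0 //; lra.
    have t1 : (a2 - b) / (a2 - a1) <= 1 by rewrite ler_pdivrMr // mul1r; lra.
    have := cvA a1 a2 (Itv01 t0 t1); rewrite !in_setE => /(_ A1 A2).
    have -> : conv (Itv01 t0 t1) (a1 : convex_lmodType R^o) a2 = b.
      change ((a2 - b) / (a2 - a1) * a1 + (1 - (a2 - b) / (a2 - a1)) * a2 = b).
      by field; rewrite gt_eqF.
    by [].
  have ub : forall a, A a -> a < b.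
    move=> a Aa; rewrite ltNge; apply/negP => ba; apply: n2; exists a; split => //.
    by rewrite lt_neqAle ba andbT; apply/eqP => e; apply: nb; rewrite e.
  have hub : has_ubound A by exists b => a /ub/ltW.
  have Ap : A (sup A) by apply: clA; apply: sup_cl.
  apply: (@notG R A A0 b _ Ap _ _ Gb).
    by rewrite lt_eqF // ub.
  move=> a Aa; apply: mulr_ge0; rewrite subr_ge0.
    exact: sup_upper_bound.
  exact/ltW/ub.
have lb : forall a, A a -> b < a.
  move=> a Aa; rewrite ltNge; apply/negP => ab; apply: n1; exists a; split => //.
  by rewrite lt_neqAle ab andbT; apply/eqP => e; apply: nb; rewrite -e.
have hlb : has_lbound A by exists b => a /lb/ltW.
have Ap : A (inf A) by apply: clA; apply: inf_cl.
apply: (@notG R A A0 b _ Ap _ _ Gb).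
  by rewrite gt_eqF // lb.
move=> a Aa; apply: mulr_le0; rewrite subr_le0.
  exact: ge_inf.
exact/ltW/lb.
Qed.
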